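(* Let $G$ be an abelian group and $S\subset G$ a subset, and let $\Gamma(G,S)$ be the Cayley sum graph. \begin{enumerate} \item If $S$ is a Sidon set in $G$, then the $4$-cycle $C_4$ is not a subgraph of $\Gamma(G,S)$. \item If $S$ is a partial symmetric Sidon set in $G$, then the complete bipartite graph $K_{2,3}$ is not a subgraph of $\Gamma(G,S)$. \end{enumerate}
   Context: The Cayley sum graph $\Gamma(G,S)$ has vertex set $G$, with $x$ and $y$ joined by an edge (a loop if $x=y$) if and only if $x+y\in S$. A subset $S\subset G$ is a Sidon set if every solution $(\alpha,\beta,\gamma,\delta)\in S^4$ of $\alpha+\beta=\gamma+\delta$ satisfies $\alpha\in\{\gamma,\delta\}$. $S$ is a partial symmetric Sidon set with center $a_0\in S$ if every solution $(\alpha,\beta,\gamma,\delta)\in S^4$ of $\alpha+\beta=\gamma+\delta$ satisfies either $\alpha\in\{\gamma,\delta\}$ or $\alpha+\beta=\gamma+\delta=a_0$; $S$ is a partial symmetric Sidon set if it is one with center some $a_0\in S$. ''$H$ is a subgraph'' means there is an injective map from the vertices of $H$ to $G$ sending edges of $H$ to edges of $\Gamma(G,S)$. *)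

(* Defs.v *)
From mathcomp Require Import all_boot all_algebra.
Set Implicit Arguments. Unset Strict Implicit. Unset Printing Implicit Defensive.
Import GRing.Theory.
Local Open Scope ring_scope.

(* Edge relation of the Cayley sum graph Gamma(G,S): x ~ y iff x + y \in S
   (x = y allowed: loops). Subsets are Prop-valued predicates. *)
Definition cayley_sum_edge (G : zmodType) (S : G -> Prop) (x y : G) : Prop :=
  S (x + y).

Definition sidon (G : zmodType) (S : G -> Prop) : Prop :=
  forall a b c d : G, S a -> S b -> S c -> S d ->
    a + b = c + d -> a = c \/ a = d.

Definition partial_sym_sidon_center (G : zmodType) (S : G -> Prop) (a0 : G)
  : Prop :=
  S a0 /\
  forall a b c d : G, S a -> S b -> S c -> S d ->
    a + b = c + d -> (a = c \/ a = d) \/ (a + b = a0 /\ c + d = a0).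

Definition partial_sym_sidon (G : zmodType) (S : G -> Prop) : Prop :=
  exists a0 : G, partial_sym_sidon_center S a0.

Definition is_subgraph (n : nat) (E : rel 'I_n) (G : zmodType) (S : G -> Prop)
  : Prop :=
  exists f : 'I_n -> G, injective f /\
    forall u v : 'I_n, E u v -> cayley_sum_edge S (f u) (f v).

Definition C4_edge : rel 'I_4 :=
  fun u v => ((u.+1 %% 4)%N == v) || ((v.+1 %% 4)%N == u).

Definition K23_edge : rel 'I_5 :=
  fun u v => ((u < 2)%N && (2 <= v)%N) || ((v < 2)%N && (2 <= u)%N).

(* Main.v *)
Require Import Defs.
From mathcomp Require Import all_boot all_algebra.
Import GRing.Theory.
Local Open Scope ring_scope.

Lemma swap4 (G : zmodType) (x y z w : G) : (x + y) + (z + w) = (y + z) + (w + x).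
Proof. by rewrite [in RHS](addrC w x) [in RHS]addrACA (addrC y x). Qed.

Lemma swapK (G : zmodType) (a b c d : G) : (a + c) + (b + d) = (a + d) + (b + c).
Proof. by rewrite addrACA [c + d]addrC addrACA. Qed.

Theorem proposition3p1 (G : zmodType) (S : G -> Prop) :
  (sidon S -> ~ is_subgraph C4_edge S) /\
  (partial_sym_sidon S -> ~ is_subgraph K23_edge S).
Proof.
split.
- move=> Hs [f [inj He]].
  pose o0 := @Ordinal 4 0 isT. pose o1 := @Ordinal 4 1 isT.
  pose o2 := @Ordinal 4 2 isT. pose o3 := @Ordinal 4 3 isT.
  have e01 := He o0 o1 isT. have e12 := He o1 o2 isT.
  have e23 := He o2 o3 isT. have e30 := He o3 o0 isT.
  rewrite /cayley_sum_edge in e01 e12 e23 e30.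
  have [h|h] := Hs _ _ _ _ e01 e23 e12 e30 (swap4 _ _ _ _ _).
  + by rewrite [f o0 + _]addrC in h; move/addrI: h => /inj /(congr1 val).
  + by rewrite [f o0 + _]addrC in h; move/addIr: h => /inj /(congr1 val).
- move=> [a0 [_ Hs]] [f [inj He]].
  pose a := f (@Ordinal 5 0 isT). pose b := f (@Ordinal 5 1 isT).
  have ac := He (@Ordinal 5 0 isT) (@Ordinal 5 2 isT) isT.
  have ad := He (@Ordinal 5 0 isT) (@Ordinal 5 3 isT) isT.
  have ae := He (@Ordinal 5 0 isT) (@Ordinal 5 4 isT) isT.
  have bc := He (@Ordinal 5 1 isT) (@Ordinal 5 2 isT) isT.
  have bd := He (@Ordinal 5 1 isT) (@Ordinal 5 3 isT) isT.
  have be := He (@Ordinal 5 1 isT) (@Ordinal 5 4 isT) isT.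
  rewrite /cayley_sum_edge in ac ad ae bc bd be.
  have key : forall i j : 'I_5, (2 <= i)%N -> (2 <= j)%N -> i != j ->
     S (f (@Ordinal 5 0 isT) + f i) -> S (f (@Ordinal 5 0 isT) + f j) ->
     S (f (@Ordinal 5 1 isT) + f i) -> S (f (@Ordinal 5 1 isT) + f j) ->
     (f (@Ordinal 5 0 isT) + f i) + (f (@Ordinal 5 1 isT) + f j) = a0.
    move=> i j hi hj hij h1 h2 h3 h4.
    have [[h|h]|[h _]] := Hs _ _ _ _ h1 h4 h2 h3 (swapK _ _ _ _ _) => //.
    + by move/addrI: h => /inj /eqP; rewrite (negPf hij).
    + by move/addIr: h => /inj /(congr1 val).
  have k1 := key (@Ordinal 5 2 isT) (@Ordinal 5 3 isT) isT isT isT ac ad bc bd.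
  have k2 := key (@Ordinal 5 2 isT) (@Ordinal 5 4 isT) isT isT isT ac ae bc be.
  rewrite -k2 in k1.
  by move/addrI: k1 => /addrI /inj /(congr1 val).
Qed.
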